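(* Let $t \geq 1$ and $p \geq 3$ be integers. Let $m_1, \dots, m_p$ be distinct real numbers and $c_1, \dots, c_p$ be distinct real numbers. For $i, j \in [p]$ let $L_{i,j}$ be the line $\{(x, m_i x + c_j) : x \in \mathbb{R}\} \subseteq \mathbb{R}^2$, and let $A_{i,j}$ be the set of points $(a,b) \in \mathbb{R}^2$ for which there exist $i', j' \in [p]$ with $(i',j') \neq (i,j)$ such that $L_{i,j}$ and $L_{i',j'}$ intersect at $(a,b)$. To each point $(a,b)$ in $\bigcup_{i,j} A_{i,j}$ assign a $t$-element set $T_{(a,b)}$, these sets being pairwise disjoint, and let $B_{i,j} = \bigcup_{(a,b) \in A_{i,j}} T_{(a,b)}$. Let $\mathcal{B} = \{B_{i,j} : i, j \in [p]\}$. Let $\mathcal{L}$ be a largest $t$-intersecting sub-family of $\mathcal{B}$, let $k \geq 1$ be an integer and let $\mathcal{A}_1, \dots, \mathcal{A}_k$ be cross-$t$-intersecting sub-families of $\mathcal{B}$. Then: (i) $\kappa(\mathcal{B},t) = |\mathcal{L}| = p$; (ii) if $k \geq \kappa(\mathcal{B},t)$ and $\mathcal{A}_1 = \dots = \mathcal{A}_k = \mathcal{L}$, then $\prod_{i=1}^k |\mathcal{A}_i|$ is maximum among all $k$-tuples of cross-$t$-intersecting sub-families of $\mathcal{B}$; (iii) if $k < \kappa(\mathcal{B},t)$ and $\mathcal{A}_1 = \dots = \mathcal{A}_k = \mathcal{L}$, then $\prod_{i=1}^k |\mathcal{A}_i|$ is not maximum among all $k$-tuples of cross-$t$-intersecting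 sub-families of $\mathcal{B}$.
   Context: $[p] = \{1,\dots,p\}$. A family $\mathcal{A}$ is $t$-intersecting if $|A \cap B| \geq t$ for all $A, B \in \mathcal{A}$ with $A \neq B$. Families $\mathcal{A}_1, \dots, \mathcal{A}_k$ (not necessarily distinct or non-empty) are cross-$t$-intersecting if for all $i \neq j$, $|A \cap B| \geq t$ for every $A \in \mathcal{A}_i$, $B \in \mathcal{A}_j$. $l(\mathcal{F},t)$ is the size of a largest $t$-intersecting sub-family of $\mathcal{F}$. For a family $\mathcal{A}$, $\mathcal{A}^{t,+} = \{A \in \mathcal{A} : |A \cap B| \geq t \text{ for all } B \in \mathcal{A}\setminus\{A\}\}$ and $\mathcal{A}^{t,-} = \mathcal{A} \setminus \mathcal{A}^{t,+}$. For $\mathcal{A} \subseteq \mathcal{F}$, $\beta(\mathcal{F},t,\mathcal{A}) = \frac{l(\mathcal{F},t) - |\mathcal{A}^{t,+}|}{|\mathcal{A}^{t,-}|}$ if $\mathcal{A}^{t,-} \neq \emptyset$, and $\frac{l(\mathcal{F},t)}{|\mathcal{F}|}$ otherwise; $\beta(\mathcal{F},t) = \min_{\mathcal{A} \subseteq \mathcal{F}} \beta(\mathcal{F},t,\mathcal{A})$ and $\kappa(\mathcal{F},t) = 1/\beta(\mathcal{F},t)$. *)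

(* Defs.v *)
From HB Require Import structures.
From mathcomp Require Import all_boot all_order all_algebra.
From mathcomp Require Import boolp reals.
Set Implicit Arguments. Unset Strict Implicit. Unset Printing Implicit Defensive.
Import Order.TTheory GRing.Theory Num.Theory.
Local Open Scope ring_scope.

Section Families.
Variable U : finType.

Definition t_intersecting (t : nat) (F : {set {set U}}) : bool :=
  [forall A in F, forall B in F, (A != B) ==> (t <= #|A :&: B|)%N].

Definition cross_t_intersecting (t k : nat) (As : 'I_k -> {set {set U}}) : Prop :=
  forall i j : 'I_k, i != j ->
    forall A B, A \in As i -> B \in As j -> (t <= #|A :&: B|)%N.

Definition lsize (F : {set {set U}}) (t : nat) : nat :=
  \max_(G in powerset F | t_intersecting t G) #|G|.

Definition fam_plus (A : {set {set U}}) (t : nat) : {set {set U}} :=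
  [set X in A | [forall Y in A :\ X, (t <= #|X :&: Y|)%N]].
Definition fam_minus (A : {set {set U}}) (t : nat) : {set {set U}} :=
  A :\: fam_plus A t.

Definition beta_at (F : {set {set U}}) (t : nat) (A : {set {set U}}) : rat :=
  if fam_minus A t != set0 then
    ((lsize F t)%:R - #|fam_plus A t|%:R) / #|fam_minus A t|%:R
  else (lsize F t)%:R / #|F|%:R.

(* beta(F,t) = min over A subset of F; the index set is nonempty (it contains
   A = set0, whose value is l(F,t)/|F|), so that value serves as the neutral
   element without changing the minimum. *)
Definition beta (F : {set {set U}}) (t : nat) : rat :=
  \big[Num.min/((lsize F t)%:R / #|F|%:R)]_(A in powerset F) beta_at F t A.

Definition kappa (F : {set {set U}}) (t : nat) : rat := (beta F t)^-1.

End Families.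

Section Geometry.
Variable R : realType.

Definition line (m c : R) : pred (R * R) := fun P => P.2 == m * P.1 + c.

Variables (p : nat) (m c : 'I_p -> R).

Definition Lij (i j : 'I_p) : pred (R * R) := line (m i) (c j).

Definition Aij (i j : 'I_p) : pred (R * R) := fun P =>
  [exists i' : 'I_p, exists j' : 'I_p,
     [&& (i', j') != (i, j), P \in Lij i j & P \in Lij i' j']].

Definition inA (P : R * R) : bool := [exists i : 'I_p, exists j : 'I_p, Aij i j P].

Variables (U : finType) (T : R * R -> {set U}).

Definition Bij (i j : 'I_p) : {set U} :=
  [set u | `[< exists P, Aij i j P /\ u \in T P >] ].

Definition Bfam : {set {set U}} := [set Bij i j | i : 'I_p, j : 'I_p].

End Geometry.

(* Main.v *)
Require Import Defs.
From HB Require Import structures.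
From mathcomp Require Import all_boot all_order all_algebra.
From mathcomp Require Import boolp reals.
From mathcomp Require Import ring lra.
Import Order.TTheory GRing.Theory Num.Theory.
Local Open Scope ring_scope.
Set Implicit Arguments. Unset Strict Implicit.

Lemma other_ord p (hp : (1 < p)%N) (i : 'I_p) : exists i' : 'I_p, i' != i.
Proof.
have h0 : (0 < p)%N by apply: ltn_trans hp.
case: (eqVneq i (Ordinal h0)) => [->|ne]; last by exists (Ordinal h0); rewrite eq_sym.
by exists (Ordinal hp); apply/eqP => /(congr1 val).
Qed.

Definition KEYP (U : finType) (t p : nat) (B : 'I_p -> 'I_p -> {set U}) :=
  forall i j i' j', (t <= #|B i j :&: B i' j'|)%N = (i != i') || (j == j').
Definition Fam (U : finType) p (B : 'I_p -> 'I_p -> {set U}) : {set {set U}} :=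
  [set B i j | i : 'I_p, j : 'I_p].
Definition sl (U : finType) p (i0 : 'I_p) (B : 'I_p -> 'I_p -> {set U}) (X : {set U}) : 'I_p :=
  odflt i0 [pick i | [exists j, X == B i j]].

Lemma Binj (U : finType) t p (B : 'I_p -> 'I_p -> {set U}) :
  (0 < t)%N -> (1 < p)%N -> KEYP t B ->
  forall i j i' j', B i j = B i' j' -> i = i' /\ j = j'.
Proof.
move=> ht hp hK i j i' j' e.
have h1 := hK i' j' i j; rewrite -e (hK i j i j) !eqxx orbT in h1.
case: (eqVneq i' i) h1 => [ei _|nii _].
  subst i'; split=> //; have := hK i j i j'; rewrite -e (hK i j i j) !eqxx orbT /=.
  by move/esym/eqP.
have [j2 nj] := @other_ord p hp j.
have h2 := hK i j2 i j; rewrite eqxx (negbTE nj) /= in h2.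
have h3 := hK i j2 i' j'; rewrite -e h2 eq_sym nii in h3.
by [].
Qed.

Lemma FamP (U : finType) p (B : 'I_p -> 'I_p -> {set U}) X :
  X \in Fam B -> exists i j, X = B i j.
Proof. by move/imset2P => [i j _ _ ->]; exists i, j. Qed.

Lemma Fam_in (U : finType) p (B : 'I_p -> 'I_p -> {set U}) i j : B i j \in Fam B.
Proof. by apply/imset2P; exists i j. Qed.

Lemma slB (U : finType) t p (i0 : 'I_p) (B : 'I_p -> 'I_p -> {set U}) :
  (0 < t)%N -> (1 < p)%N -> KEYP t B -> forall i j, sl i0 B (B i j) = i.
Proof.
move=> ht hp hK i j; rewrite /sl; case: pickP => [i' /existsP [j' /eqP e]|h] /=.
  by have [] := Binj ht hp hK e.
by have := h i; rewrite /=; move/existsP; case; exists j.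
Qed.

Lemma F1 (U : finType) t p (i0 : 'I_p) (B : 'I_p -> 'I_p -> {set U}) :
  (0 < t)%N -> (1 < p)%N -> KEYP t B -> forall X Y, X \in Fam B -> Y \in Fam B ->
  (t <= #|X :&: Y|)%N = (sl i0 B X != sl i0 B Y) || (X == Y).
Proof.
move=> ht hp hK X Y /FamP [i [j ->]] /FamP [i' [j' ->]].
rewrite hK !(slB i0 ht hp hK); case: (eqVneq i i') => [<-|] //=.
apply/idP/idP => [/eqP -> //|/eqP e]; by have [_ ->] := Binj ht hp hK e.
Qed.
Lemma key_geom (R : realType) (t p : nat) (m c : 'I_p -> R)
  (U : finType) (T : R * R -> {set U}) :
  (1 <= t)%N -> (1 < p)%N ->
  injective m -> injective c ->
  (forall P, inA m c P -> #|T P| = t) ->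
  (forall P Q, inA m c P -> inA m c Q -> P != Q -> [disjoint T P & T Q]) ->
  forall i j i' j', (t <= #|Bij m c T i j :&: Bij m c T i' j'|)%N = (i != i') || (j == j').
Proof.
move=> ht hp injm injc hT hdis.
have inB : forall i j P, Aij m c i j P -> T P \subset Bij m c T i j.
  move=> i j P hP; apply/subsetP => u uP; rewrite inE; apply/asboolP.
  by exists P.
have AinA : forall i j P, Aij m c i j P -> inA m c P.
  by move=> i j P hP; apply/existsP; exists i; apply/existsP; exists j.
have diff : forall i j i' j', i != i' ->
    (t <= #|Bij m c T i j :&: Bij m c T i' j'|)%N.
  move=> i j i' j' nii.
  have nz : m i - m i' != 0 by rewrite subr_eq0 (inj_eq injm).
  pose x := (c j' - c j) / (m i - m i').
  pose P := (x, m i * x + c j).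
  have hx : (m i - m i') * x = c j' - c j by rewrite /x mulrC divfK.
  have L1 : P \in Lij m c i j by rewrite unfold_in /Lij /line /=.
  have L2 : P \in Lij m c i' j'.
    rewrite unfold_in /Lij /line /=; apply/eqP.
    rewrite mulrBl in hx; lra.
  have A1 : Aij m c i j P.
    apply/existsP; exists i'; apply/existsP; exists j'.
    rewrite L1 L2 !andbT; apply/eqP => -[e _]; by rewrite e eqxx in nii.
  have A2 : Aij m c i' j' P.
    apply/existsP; exists i; apply/existsP; exists j.
    rewrite L1 L2 !andbT; apply/eqP => -[e _]; by rewrite e eqxx in nii.
  rewrite -(hT P (AinA _ _ _ A1)); apply: subset_leq_card.
  by rewrite subsetI (inB _ _ _ A1) (inB _ _ _ A2).
move=> i j i' j'.
case: (eqVneq i i') => [<-|nii] /=; last by apply: diff.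
case: (eqVneq j j') => [<-|njj].
  rewrite setIid; have [i2 ne] := @other_ord p hp i.
  apply: leq_trans (diff i j i2 j _) _; first by rewrite eq_sym.
  by apply: subset_leq_card; apply: subsetIl.
apply/negbTE; rewrite -ltnNge; apply: leq_trans ht.
rewrite ltnS leqn0 cards_eq0; apply/eqP/setP => u; rewrite !inE.
apply/negP => /andP [/asboolP [P [hP uP]] /asboolP [Q [hQ uQ]]].
case: (eqVneq P Q) => [ePQ|nPQ].
  subst Q.
  move: hP hQ => /existsP [a /existsP [b /and3P [_ h1 _]]] /existsP [a' /existsP [b' /and3P [_ h2 _]]].
  move: h1 h2; rewrite !unfold_in /Lij /line => /eqP -> /eqP /addrI /injc e.
  by rewrite e eqxx in njj.
have := hdis P Q (AinA _ _ _ hP) (AinA _ _ _ hQ) nPQ.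
by move/disjointFr => /(_ u uP); rewrite uQ.
Qed.

Lemma tint_le (U : finType) t p (i0 : 'I_p) (B : 'I_p -> 'I_p -> {set U}) :
  (0 < t)%N -> (1 < p)%N -> KEYP t B -> forall G : {set {set U}},
  G \subset Fam B -> t_intersecting t G -> (#|G| <= p)%N.
Proof.
move=> ht hp hK G sub tint.
rewrite -(@card_in_imset _ _ (sl i0 B)); last first.
  move=> X Y XG YG e; apply/eqP; apply/negPn/negP => nXY.
  move/forallP: tint => /(_ X) /implyP /(_ XG) /forallP /(_ Y) /implyP /(_ YG) /implyP /(_ nXY).
  rewrite (F1 i0 ht hp hK (subsetP sub _ XG) (subsetP sub _ YG)) e eqxx /=.
  by rewrite (negbTE nXY).
by apply: leq_trans (max_card _) _; rewrite card_ord.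
Qed.

Lemma G0_prop (U : finType) t p (i0 : 'I_p) (B : 'I_p -> 'I_p -> {set U}) :
  (0 < t)%N -> (1 < p)%N -> KEYP t B ->
  [/\ [set B i i0 | i : 'I_p] \subset Fam B, t_intersecting t [set B i i0 | i : 'I_p]
    & #|[set B i i0 | i : 'I_p]| = p].
Proof.
move=> ht hp hK; split.
- by apply/subsetP => X /imsetP [i _ ->]; apply: Fam_in.
- apply/forallP => X; apply/implyP => /imsetP [i _ ->].
  apply/forallP => Y; apply/implyP => /imsetP [i' _ ->].
  by apply/implyP => _; rewrite hK eqxx orbT.
- rewrite card_imset ?card_ord //.
  by move=> i i' e; have [] := Binj ht hp hK e.
Qed.

Lemma lsize_eq (U : finType) t p (i0 : 'I_p) (B : 'I_p -> 'I_p -> {set U}) :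
  (0 < t)%N -> (1 < p)%N -> KEYP t B -> lsize (Fam B) t = p.
Proof.
move=> ht hp hK; apply/eqP; rewrite eqn_leq; apply/andP; split.
  apply/bigmax_leqP => G /andP [].
  rewrite powersetE => sub tint; exact: (tint_le i0 ht hp hK sub tint).
have [s1 s2 s3] := G0_prop i0 ht hp hK.
rewrite -{1}s3; apply: (@leq_bigmax_cond _ _ _ [set B i i0 | i : 'I_p]).
by rewrite powersetE s1 s2.
Qed.

Lemma cardF (U : finType) t p (B : 'I_p -> 'I_p -> {set U}) :
  (0 < t)%N -> (1 < p)%N -> KEYP t B -> #|Fam B| = (p * p)%N.
Proof.
move=> ht hp hK.
have -> : Fam B = (fun u : 'I_p * 'I_p => B u.1 u.2) @: [set: 'I_p * 'I_p].
  apply/setP => X; apply/imset2P/imsetP => [[i j _ _ ->]|[[i j] _ ->]].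
    by exists (i, j).
  by exists i j.
rewrite card_imset ?cardsT ?card_prod ?card_ord //.
by move=> [i j] [i' j'] /= e; have [-> ->] := Binj ht hp hK e.
Qed.

Lemma card_sl (U : finType) p (i0 : 'I_p) (B : 'I_p -> 'I_p -> {set U}) (Y : {set {set U}}) :
  #|Y| = (\sum_(s : 'I_p) #|[set X in Y | sl i0 B X == s]|)%N.
Proof.
rewrite -sum1_card (partition_big (sl i0 B) predT) //.
by apply: eq_bigr => s _; rewrite sum1dep_card.
Qed.

Lemma per_slope (U : finType) t p (i0 : 'I_p) (B : 'I_p -> 'I_p -> {set U}) :
  (0 < t)%N -> (1 < p)%N -> KEYP t B -> forall (A : {set {set U}}) (s : 'I_p), A \subset Fam B ->
  (#|[set X in fam_minus A t | sl i0 B X == s]| + p * #|[set X in fam_plus A t | sl i0 B X == s]| <= p)%N.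
Proof.
move=> ht hp hK A s sub.
case: (set_0Vmem [set X in fam_plus A t | sl i0 B X == s]) => [->|[X]].
  rewrite cards0 muln0 addn0.
  apply: (@leq_trans #|[set B s j | j : 'I_p]|); last first.
    by apply: leq_trans (leq_imset_card _ _) _; rewrite card_ord.
  apply: subset_leq_card; apply/subsetP => Y; rewrite !inE => /andP [/andP [_ YA] /eqP e].
  have [i [j eY]] := FamP (subsetP sub _ YA).
  apply/imsetP; exists j => //; rewrite eY; congr B.
  by rewrite -e eY (slB i0 ht hp hK).
rewrite !inE => /andP [/andP [XA /forallP hX] /eqP eX].
have uniqX : forall Y, Y \in A -> sl i0 B Y = s -> Y = X.
  move=> Y YA eY; apply/eqP; apply/negPn/negP => nYX.
  have := hX Y; rewrite !inE nYX YA /=.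
  rewrite (F1 i0 ht hp hK (subsetP sub _ XA) (subsetP sub _ YA)) eX eY eqxx /=.
  by rewrite eq_sym (negbTE nYX).
have -> : [set X in fam_minus A t | sl i0 B X == s] = set0.
  apply/setP => Y; rewrite !inE; apply/negP => /andP [/andP [nYp YA] /eqP eY].
  move: nYp; rewrite (uniqX Y YA eY) XA /=.
  by move/negP; apply; apply/forallP.
rewrite cards0 add0n; apply: (@leq_trans (p * 1)); last by rewrite muln1.
rewrite leq_mul2l; apply/orP; right.
rewrite -(cards1 X); apply: subset_leq_card; apply/subsetP => Y.
rewrite !inE => /andP [/andP [YA _] /eqP eY]; by rewrite (uniqX Y YA eY).
Qed.

Lemma sum_bound (U : finType) t p (i0 : 'I_p) (B : 'I_p -> 'I_p -> {set U}) :
  (0 < t)%N -> (1 < p)%N -> KEYP t B -> forall A : {set {set U}}, A \subset Fam B ->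
  (#|fam_minus A t| + p * #|fam_plus A t| <= p * p)%N.
Proof.
move=> ht hp hK A sub.
rewrite (card_sl i0 B (fam_minus A t)) (card_sl i0 B (fam_plus A t)) big_distrr -big_split /=.
apply: (@leq_trans (\sum_(s : 'I_p) p)).
  by apply: leq_sum => s _; exact: (per_slope i0 ht hp hK s sub).
by rewrite sum_nat_const card_ord.
Qed.

Lemma beta_at_ge (U : finType) t p (i0 : 'I_p) (B : 'I_p -> 'I_p -> {set U}) :
  (0 < t)%N -> (1 < p)%N -> KEYP t B -> forall A : {set {set U}}, A \subset Fam B ->
  (p%:R)^-1 <= beta_at (Fam B) t A.
Proof.
move=> ht hp hK A sub.
have p0 : (0 < p)%N by apply: ltn_trans hp.
have p0r : 0 < p%:R :> rat by rewrite ltr0n.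
rewrite /beta_at (lsize_eq i0 ht hp hK) (cardF ht hp hK).
case: ifP => [mne|_]; last by rewrite natrM invfM mulrA divff ?mul1r // gt_eqF.
have a0 : 0 < #|fam_minus A t|%:R :> rat by rewrite ltr0n card_gt0.
have h := sum_bound i0 ht hp hK sub.
have hr : (#|fam_minus A t| + p * #|fam_plus A t|)%:R <= (p * p)%:R :> rat by rewrite ler_nat.
rewrite natrD !natrM in hr.
rewrite ler_pdivlMr // mulrC ler_pdivrMr //.
nra.
Qed.

Lemma beta_eq (U : finType) t p (i0 : 'I_p) (B : 'I_p -> 'I_p -> {set U}) :
  (0 < t)%N -> (1 < p)%N -> KEYP t B -> beta (Fam B) t = (p%:R)^-1.
Proof.
move=> ht hp hK.
have p0 : (0 < p)%N by apply: ltn_trans hp.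
have hidx : (lsize (Fam B) t)%:R / #|Fam B|%:R = (p%:R)^-1 :> rat.
  by rewrite (lsize_eq i0 ht hp hK) (cardF ht hp hK) natrM invfM mulrA divff ?mul1r // pnatr_eq0 -lt0n.
rewrite /beta hidx; apply/eqP; rewrite eq_le; apply/andP; split.
  apply: (big_rec (fun x => x <= (p%:R)^-1)) => // A x _ hx.
  by rewrite ge_min hx orbT.
apply: (big_ind (fun x => (p%:R)^-1 <= x)) => //.
  by move=> x y hx hy; rewrite le_min hx hy.
by move=> A; rewrite powersetE => sub; apply: (beta_at_ge i0 ht hp hK).
Qed.

Lemma kappa_eq (U : finType) t p (i0 : 'I_p) (B : 'I_p -> 'I_p -> {set U}) :
  (0 < t)%N -> (1 < p)%N -> KEYP t B -> kappa (Fam B) t = p%:R.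
Proof. by move=> ht hp hK; rewrite /kappa (beta_eq i0 ht hp hK) invrK. Qed.

Lemma class_le (U : finType) t p (i0 : 'I_p) (B : 'I_p -> 'I_p -> {set U}) :
  (0 < t)%N -> (1 < p)%N -> KEYP t B -> forall (Y : {set {set U}}) (s : 'I_p),
  Y \subset Fam B -> (#|[set X in Y | sl i0 B X == s]| <= p)%N.
Proof.
move=> ht hp hK Y s sub.
apply: (@leq_trans #|[set B s j | j : 'I_p]|); last first.
  by apply: leq_trans (leq_imset_card _ _) _; rewrite card_ord.
apply: subset_leq_card; apply/subsetP => X; rewrite !inE => /andP [XY /eqP e].
have [i [j eX]] := FamP (subsetP sub _ XY).
apply/imsetP; exists j => //; rewrite eX; congr B.
by rewrite -e eX (slB i0 ht hp hK).
Qed.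

Lemma col_le (U : finType) t p (i0 : 'I_p) (B : 'I_p -> 'I_p -> {set U}) :
  (0 < t)%N -> (1 < p)%N -> KEYP t B -> forall k (Bs : 'I_k -> {set {set U}}) (s : 'I_p),
  (p <= k)%N -> (forall i, Bs i \subset Fam B) -> cross_t_intersecting t Bs ->
  (\sum_(i < k) #|[set X in Bs i | sl i0 B X == s]| <= k)%N.
Proof.
move=> ht hp hK k Bs s pk sub cr.
case: (pickP (fun i : 'I_k => 1 < #|[set X in Bs i | sl i0 B X == s]|)%N) => [i hi|hn].
  rewrite (bigD1 i) //= big1 ?addn0; first by apply: leq_trans _ pk; exact: (class_le i0 ht hp hK s (sub i)).
  move=> j nji. apply/eqP; rewrite cards_eq0; apply/eqP/setP => Y; rewrite !inE.
  apply/negP => /andP [YB /eqP eY].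
  move/card_gt1P: hi => [X [X' [XB X'B nXX]]].
  move: XB X'B; rewrite !inE => /andP [XB /eqP eX] /andP [X'B /eqP eX'].
  have same : forall Z, Z \in Bs i -> sl i0 B Z = s -> Z = Y.
    move=> Z ZB eZ; have := cr i j; rewrite eq_sym nji => /(_ isT Z Y ZB YB).
    rewrite (F1 i0 ht hp hK (subsetP (sub i) _ ZB) (subsetP (sub j) _ YB)) eZ eY eqxx /=.
    by move/eqP.
  by rewrite (same X XB eX) (same X' X'B eX') eqxx in nXX.
apply: (@leq_trans (\sum_(i < k) 1)); last by rewrite sum_nat_const card_ord muln1.
by apply: leq_sum => i _; have := hn i; rewrite /= ltnNge => /negbFE.
Qed.

Lemma prod_bound (U : finType) t p (i0 : 'I_p) (B : 'I_p -> 'I_p -> {set U}) :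
  (0 < t)%N -> (1 < p)%N -> KEYP t B -> forall k (Bs : 'I_k -> {set {set U}}),
  (p <= k)%N -> (forall i, Bs i \subset Fam B) -> cross_t_intersecting t Bs ->
  (\prod_(i < k) #|Bs i| <= p ^ k)%N.
Proof.
move=> ht hp hK k Bs pk sub cr.
have k0 : (0 < k)%N by apply: leq_trans pk; apply: ltn_trans hp.
have hsum : (\sum_(i < k) #|Bs i| <= p * k)%N.
  rewrite (eq_bigr (fun i => \sum_(s : 'I_p) #|[set X in Bs i | sl i0 B X == s]|)%N); last first.
    by move=> i _; apply: card_sl.
  rewrite exchange_big /=.
  apply: (@leq_trans (\sum_(s : 'I_p) k)); last by rewrite sum_nat_const card_ord.
  by apply: leq_sum => s _; apply: (col_le i0 ht hp hK s pk sub cr).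
pose E (i : 'I_k) := (#|Bs i|)%:R : rat.
have agm := (leif_AGM_scaled (A := [set: 'I_k]) (E := E) _).1.
have := agm (fun i _ => mulrn_wge0 _ (ler0n _ _)).
rewrite cardsT card_ord prodrMn_const cardsT card_ord.
have e1 : \prod_(i in [set: 'I_k]) E i = (\prod_(i < k) #|Bs i|)%:R.
  by rewrite natr_prod; apply: eq_bigl => i; rewrite in_setT.
have e2 : \sum_(i in [set: 'I_k]) E i = (\sum_(i < k) #|Bs i|)%:R.
  by rewrite natr_sum; apply: eq_bigl => i; rewrite in_setT.
rewrite e1 e2 => h.
have h2 : ((\sum_(i < k) #|Bs i|)%:R : rat) ^+ k <= ((p * k)%:R) ^+ k.
  by apply: lerXn2r; rewrite ?nnegrE ?ler0n // ler_nat.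
have h3 := le_trans h h2.
rewrite natrM exprMn -mulr_natr natrX in h3.
rewrite -(ler_nat rat) natrX.
by rewrite ler_pM2r in h3; [exact: h3 | rewrite exprn_gt0 // ltr0n].
Qed.

Lemma constr (U : finType) t p (i0 : 'I_p) (B : 'I_p -> 'I_p -> {set U}) :
  (0 < t)%N -> (1 < p)%N -> KEYP t B -> forall k, (0 < k)%N -> (k < p)%N ->
  exists2 Bs : 'I_k -> {set {set U}},
    (forall i, Bs i \subset Fam B) /\ cross_t_intersecting t Bs &
    (p ^ k < \prod_(i < k) #|Bs i|)%N.
Proof.
move=> ht hp hK [//|k'] _ kp.
pose g (s : 'I_p) : 'I_k'.+1 := inord (s - (p - k'.+1)).
pose Bs (i : 'I_k'.+1) := [set X in Fam B | g (sl i0 B X) == i].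
have ccard : forall s : 'I_p, #|[set B s j | j : 'I_p]| = p.
  move=> s; rewrite card_imset ?card_ord //.
  by move=> j j' e; have [] := Binj ht hp hK e.
have csub : forall (s : 'I_p) i, g s = i -> [set B s j | j : 'I_p] \subset Bs i.
  move=> s i e; apply/subsetP => X /imsetP [j _ ->].
  by rewrite inE Fam_in (slB i0 ht hp hK) e eqxx.
have lb : forall i, (p <= #|Bs i|)%N.
  move=> i; have hs : (p - k'.+1 + i < p)%N.
    by rewrite -ltn_subRL subKn ?ltn_ord // ltnW.
  rewrite -(ccard (Ordinal hs)); apply: subset_leq_card; apply: csub.
  by rewrite /g; apply: val_inj => /=; rewrite addKn inordK.
have h1p : (1 < p)%N := hp.
have lb0 : (p + p <= #|Bs ord0|)%N.
  have h0p : (0 < p)%N by apply: ltn_trans hp.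
  pose s0 : 'I_p := Ordinal h0p.
  pose s1 : 'I_p := Ordinal h1p.
  have g0 : forall s : 'I_p, (s <= 1)%N -> g s = ord0.
    move=> s hs; apply: val_inj => /=.
    have e : (s - (p - k'.+1) = 0)%N by apply/eqP; rewrite subn_eq0; apply: leq_trans hs _; rewrite subn_gt0.
    by rewrite /g e inordK.
  have disj : [set B s0 j | j : 'I_p] :&: [set B s1 j | j : 'I_p] = set0.
    apply/setP => X; rewrite !inE. apply/negP => /andP [/imsetP [j _ ->] /imsetP [j' _ e]].
    by have [] := Binj ht hp hK e.
  apply: (@leq_trans #|[set B s0 j | j : 'I_p] :|: [set B s1 j | j : 'I_p]|).
    by rewrite cardsU disj cards0 subn0 !ccard.
  apply: subset_leq_card; rewrite subUset !csub //; by apply: g0.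
exists Bs.
  split => [i|i j nij X Y]; first by apply/subsetP => X; rewrite inE => /andP [].
  rewrite !inE => /andP [XF /eqP eX] /andP [YF /eqP eY].
  rewrite (F1 i0 ht hp hK XF YF); apply/orP; left; apply/negP => /eqP e.
  by move: nij; rewrite -eX -eY e eqxx.
rewrite big_ord_recl expnS.
apply: (@leq_trans ((p + p) * p ^ k')).
  rewrite ltn_mul2r expn_gt0 (ltn_trans _ hp) //= -addn1 leq_add2l.
  by apply: ltn_trans hp.
apply: leq_mul => //; rewrite -{1}(card_ord k') -prod_nat_const.
by apply: leq_prod => i _; apply: lb.
Qed.

Unset Implicit Arguments.

Theorem theorem5p4 (R : realType) (t p : nat) (m c : 'I_p -> R)
  (U : finType) (T : R * R -> {set U})
  (L : {set {set U}}) (k : nat) (As : 'I_k -> {set {set U}}) :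
  (1 <= t)%N -> (3 <= p)%N ->
  injective m -> injective c ->
  (forall P, inA m c P -> #|T P| = t) ->
  (forall P Q, inA m c P -> inA m c Q -> P != Q -> [disjoint T P & T Q]) ->
  (* L is a largest t-intersecting sub-family of B *)
  L \subset Bfam m c T -> t_intersecting t L ->
  (forall G : {set {set U}}, G \subset Bfam m c T -> t_intersecting t G -> (#|G| <= #|L|)%N) ->
  (* A_1, ..., A_k are cross-t-intersecting sub-families of B *)
  (1 <= k)%N ->
  (forall i, As i \subset Bfam m c T) -> cross_t_intersecting t As ->
  [/\ (* (i) *)
      kappa (Bfam m c T) t = p%:R /\ #|L| = p,
      (* (ii) *)
      (kappa (Bfam m c T) t <= k%:R -> (forall i, As i = L) ->
        forall Bs : 'I_k -> {set {set U}},
          (forall i, Bs i \subset Bfam m c T) -> cross_t_intersecting t Bs ->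
          (\prod_(i < k) #|Bs i| <= \prod_(i < k) #|As i|)%N)
    & (* (iii) *)
      (k%:R < kappa (Bfam m c T) t -> (forall i, As i = L) ->
        exists2 Bs : 'I_k -> {set {set U}},
          (forall i, Bs i \subset Bfam m c T) /\ cross_t_intersecting t Bs &
          (\prod_(i < k) #|As i| < \prod_(i < k) #|Bs i|)%N)].
Proof.
move=> ht1 hp3 injm injc hT hdis Lsub Lt Lmax k1 Asub Acr.
have ht : (0 < t)%N by [].
have hp : (1 < p)%N by apply: leq_trans hp3.
have h0p : (0 < p)%N by apply: ltn_trans hp.
pose i0 : 'I_p := Ordinal h0p.
have hK : KEYP t (Bij m c T) := @key_geom R t p m c U T ht1 hp injm injc hT hdis.
have eF : Bfam m c T = Fam (Bij m c T) by [].
rewrite eF in Lsub Lmax Asub *.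
have hkap := kappa_eq i0 ht hp hK.
have cL : #|L| = p.
  apply/eqP; rewrite eqn_leq (tint_le i0 ht hp hK Lsub Lt) /=.
  have [s1 s2 s3] := G0_prop i0 ht hp hK.
  by rewrite -{1}s3; apply: Lmax.
have prodL : (forall i, As i = L) -> (\prod_(i < k) #|As i| = p ^ k)%N.
  move=> eA; rewrite (eq_bigr (fun _ => p)) ?prod_nat_const ?card_ord //.
  by move=> i _; rewrite eA cL.
split => //.
- move=> hk eA Bs Bsub Bcr; rewrite prodL //.
  rewrite hkap ler_nat in hk.
  exact: (prod_bound i0 ht hp hK hk Bsub Bcr).
- move=> hk eA; rewrite hkap ltr_nat in hk.
  have [Bs h1 h2] := constr i0 ht hp hK k1 hk.
  by exists Bs => //; rewrite prodL.
Qed.
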